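(* Let $A,B,C\in\mathcal G$ be mutually adjacent. Then there is a star or a top containing $A$, $B$ and $C$.
   Context: $K$ is a (not necessarily commutative) field and $V$ is a left vector space over $K$ of arbitrary (possibly infinite) dimension with $\dim V>2$. $\mathcal G:=\{X\le V\mid X\cong V/X\}$, assumed nonempty. Two elements $X,Y\in\mathcal G$ are adjacent if $\dim((X+Y)/X)=\dim((X+Y)/Y)=1$. A star is a set $\mathcal G[M\rangle:=\{E\le V\mid M\le E,\ \dim(E/M)=1\}$, where $M\le V$ is a subspace for which some $X\in\mathcal G$ satisfies $M\le X$, $\dim(X/M)=1$. A top is a set $\mathcal G\langle N]:=\{E\le V\mid E\le N,\ \dim(N/E)=1\}$, where $N\le V$ is a subspace for which some $X\in\mathcal G$ satisfies $X\le N$, $\dim(N/X)=1$. *)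

(* Defs.v *)
From HB Require Import structures.
From mathcomp Require Import all_boot all_algebra.
Set Implicit Arguments. Unset Strict Implicit. Unset Printing Implicit Defensive.
Import GRing.Theory.
Local Open Scope ring_scope.

(* K : a division ring (unitRingType whose nonzero elements are all units),
   V : a left K-vector space (lmodType K), of arbitrary dimension.
   Subspaces are represented as predicates V -> Prop. *)

Section Defs.
Variables (K : unitRingType) (V : lmodType K).

Definition subspace (X : V -> Prop) : Prop :=
  X 0 /\ forall (k : K) (u v : V), X u -> X v -> X (k *: u + v).

Definition subsp (X Y : V -> Prop) : Prop := forall v, X v -> Y v.

Definition sumsp (X Y : V -> Prop) : V -> Prop :=
  fun v => exists x y, X x /\ Y y /\ v = x + y.

(* M <= E and dim (E/M) = 1 : E/M is spanned by the class of a single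
   vector v of E not in M. *)
Definition codim1 (M E : V -> Prop) : Prop :=
  subsp M E /\
  exists v, E v /\ ~ M v /\
    forall e, E e -> exists (k : K) m, M m /\ e = k *: v + m.

(* X ≅ V/X : by the first isomorphism theorem, an isomorphism V/X -> X is
   the same as a K-linear map V -> V with kernel X and image X. *)
Definition iso_quot (X : V -> Prop) : Prop :=
  exists f : V -> V,
    (forall (k : K) (u v : V), f (k *: u + v) = k *: f u + f v) /\
    (forall v, f v = 0 <-> X v) /\
    (forall x, X x <-> exists v, f v = x).

Definition inG (X : V -> Prop) : Prop := subspace X /\ iso_quot X.

Definition adjacent (X Y : V -> Prop) : Prop :=
  codim1 X (sumsp X Y) /\ codim1 Y (sumsp X Y).

Definition in_star (M E : V -> Prop) : Prop := subspace E /\ codim1 M E.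
Definition star_base (M : V -> Prop) : Prop :=
  subspace M /\ exists X, inG X /\ codim1 M X.

Definition in_top (N E : V -> Prop) : Prop := subspace E /\ codim1 E N.
Definition top_base (N : V -> Prop) : Prop :=
  subspace N /\ exists X, inG X /\ codim1 X N.

Definition dim_gt2 : Prop :=
  exists u1 u2 u3 : V, forall a b c : K,
    a *: u1 + b *: u2 + c *: u3 = 0 -> [/\ a = 0, b = 0 & c = 0].

End Defs.

(* Main.v *)
Require Import Defs.
From mathcomp Require Import all_boot all_algebra.
From Stdlib Require Import Classical.
Local Open Scope ring_scope.
Import GRing.Theory.
Set Implicit Arguments. Unset Strict Implicit.

Lemma subD (K : unitRingType) (V : lmodType K) (X : V -> Prop) u v :
  subspace X -> X u -> X v -> X (u + v).
Proof. by move=> [_ H] Hu Hv; have := H 1 u v Hu Hv; rewrite scale1r. Qed.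

Lemma subZ (K : unitRingType) (V : lmodType K) (X : V -> Prop) k u :
  subspace X -> X u -> X (k *: u).
Proof. by move=> [H0 H] Hu; have := H k u 0 Hu H0; rewrite addr0. Qed.

Lemma subB (K : unitRingType) (V : lmodType K) (X : V -> Prop) u v :
  subspace X -> X u -> X v -> X (u - v).
Proof. move=> hX Hu Hv; apply: subD => //; rewrite -scaleN1r; exact: subZ. Qed.

Lemma subZinv (K : unitRingType) (V : lmodType K) (X : V -> Prop) k u :
  subspace X -> k \is a GRing.unit -> X (k *: u) -> X u.
Proof. by move=> hX ku H; have := subZ (k^-1) hX H; rewrite scalerA mulVr // scale1r. Qed.

Lemma L1 (K : unitRingType) (V : lmodType K)
  (Kdiv : forall x : K, x != 0 -> x \is a GRing.unit) (M E : V -> Prop) w :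
  subspace M -> codim1 M E -> E w -> ~ M w ->
  forall e, E e -> exists k m, M m /\ e = k *: w + m.
Proof.
move=> hM [_ [v [Ev [nMv Hv]]]] Ew nMw e Ee.
have [k0 [m0 [Mm0 ew]]] := Hv w Ew.
have [k [m [Mm ee]]] := Hv e Ee.
have k0u : k0 \is a GRing.unit.
  apply: Kdiv; apply/eqP => k00; apply: nMw; by rewrite ew k00 scale0r add0r.
exists (k * k0^-1), (m - (k * k0^-1) *: m0); split.
  apply: subB => //; exact: subZ.
rewrite ee ew scalerDr scalerA -mulrA mulVr // mulr1.
by rewrite [m - _]addrC addrA addrK.
Qed.
Lemma codim1_ext (K : unitRingType) (V : lmodType K) (M M' E E' : V -> Prop) :
  (forall x, M x <-> M' x) -> (forall x, E x <-> E' x) -> codim1 M E -> codim1 M' E'.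
Proof.
move=> hM hE [sME [v [Ev [nMv H]]]]; split.
  by move=> x /hM /sME /hE.
exists v; split; first by apply/hE.
split; first by move/hM.
move=> e /hE /H [k [m [Mm ->]]]; exists k, m; split => //; exact/hM.
Qed.

Lemma sum_l (K : unitRingType) (V : lmodType K) (X Y : V -> Prop) x :
  subspace Y -> X x -> sumsp X Y x.
Proof. by move=> [Y0 _] Xx; exists x, 0; rewrite addr0. Qed.

Lemma sum_r (K : unitRingType) (V : lmodType K) (X Y : V -> Prop) x :
  subspace X -> Y x -> sumsp X Y x.
Proof. by move=> [X0 _] Yx; exists 0, x; rewrite add0r. Qed.

Lemma sum_comm (K : unitRingType) (V : lmodType K) (X Y : V -> Prop) x :
  sumsp X Y x <-> sumsp Y X x.
Proof. by split => -[a [b [Ha [Hb ->]]]]; exists b, a; rewrite addrC. Qed.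

Lemma sum_sub (K : unitRingType) (V : lmodType K) (X Y : V -> Prop) :
  subspace X -> subspace Y -> subspace (sumsp X Y).
Proof.
move=> hX hY; split; first by exists 0, 0; rewrite addr0; split; [case: hX|case: hY].
move=> k u v [a [b [Ha [Hb ->]]]] [a' [b' [Ha' [Hb' ->]]]].
exists (k *: a + a'), (k *: b + b'); split; first by apply: (proj2 hX).
split; first by apply: (proj2 hY).
by rewrite scalerDr addrACA.
Qed.

Lemma cap_sub (K : unitRingType) (V : lmodType K) (X Y : V -> Prop) :
  subspace X -> subspace Y -> subspace (fun x => X x /\ Y x).
Proof.
move=> [X0 HX] [Y0 HY]; split => // k u v [? ?] [? ?]; split; [exact: HX|exact: HY].
Qed.

Lemma capA (K : unitRingType) (V : lmodType K)
  (Kdiv : forall x : K, x != 0 -> x \is a GRing.unit) (A B : V -> Prop) :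
  subspace A -> subspace B -> codim1 B (sumsp A B) ->
  codim1 (fun x => A x /\ B x) A.
Proof.
move=> hA hB hc; have hc' := hc; case: hc' => _ [v [[a [b [Aa [Bb ev]]]] [nBv _]]].
have nBa : ~ B a by move=> Ba; apply: nBv; rewrite ev; exact: subD.
split; first by move=> x [].
exists a; split => //; split; first by case.
move=> a' Aa'.
have [k [b' [Bb' e']]] := L1 Kdiv hB hc (sum_l hB Aa) nBa (sum_l hB Aa').
exists k, b'; split => //; split => //.
have -> : b' = a' - k *: a by rewrite e' addrAC subrr add0r.
by apply: subB => //; apply: subZ.
Qed.

Theorem lemma2p3 (K : unitRingType) (V : lmodType K)
  (Kdiv : forall x : K, x != 0 -> x \is a GRing.unit)
  (hdim : dim_gt2 V)
  (hG : exists X : V -> Prop, inG X)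
  (A B C : V -> Prop)
  (hA : inG A) (hB : inG B) (hC : inG C)
  (hAB : adjacent A B) (hBC : adjacent B C) (hAC : adjacent A C) :
  (exists M : V -> Prop, star_base M /\ in_star M A /\ in_star M B /\ in_star M C)
  \/
  (exists N : V -> Prop, top_base N /\ in_top N A /\ in_top N B /\ in_top N C).
Proof.
have sA := proj1 hA; have sB := proj1 hB; have sC := proj1 hC.
case: hAB => cAN cBN; case: hBC => cBBC cCBC; case: hAC => cAAC cCAC.
have sN := sum_sub sA sB.
case: (classic (forall x, C x -> sumsp A B x)) => [Hsub|Hnsub].
  right; exists (sumsp A B); split; first by split => //; exists A.
  do 2 (split; first by split).
  split => //; apply: (codim1_ext _ _ cCAC) => // x; split.
    case=> [a [c [Aa [Cc ->]]]]; apply: subD => //; [exact: sum_l | exact: Hsub].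
  case: cAAC => _ [w [ACw [nAw _]]].
  have Nw : sumsp A B w.
    case: ACw => [a [c [Aa [Cc ->]]]]; apply: subD => //; [exact: sum_l | exact: Hsub].
  move=> Nx; have [k [a [Aa ->]]] := L1 Kdiv sA cAN Nw nAw Nx.
  have sAC := sum_sub sA sC.
  apply: subD => //; [exact: subZ | exact: sum_l].
have [c Hc] := not_all_ex_not _ _ Hnsub.
have [Cc nNc] := imply_to_and _ _ Hc.
set M := fun x => A x /\ B x.
have cMA : codim1 M A := capA Kdiv sA sB cBN.
have cMB : codim1 M B.
  have h := capA Kdiv sB sA (codim1_ext (fun x => iff_refl _) (fun x => sum_comm A B x) cAN).
  apply: (codim1_ext _ _ h) => x //; rewrite /M; tauto.
have nAc : ~ A c by move=> Ac; apply: nNc; exact: sum_l.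
have nBc : ~ B c by move=> Bc; apply: nNc; exact: sum_r.
have Hdec : forall x, C x -> exists k m, M m /\ x = k *: c + m.
  move=> x Cx.
  have [k [a [Aa e1]]] := L1 Kdiv sA cAAC (sum_r sA Cc) nAc (sum_r sA Cx).
  have [k' [b [Bb e2]]] := L1 Kdiv sB cBBC (sum_r sB Cc) nBc (sum_r sB Cx).
  case: (eqVneq k k') => [ekk|nkk].
    subst k'; exists k, a; split => //; split => //.
    by have -> : a = b by apply: (@addrI _ (k *: c)); rewrite -e1 -e2.
  exfalso; apply: nNc.
  have h1 : k *: c = x - a by rewrite e1 addrK.
  have h2 : k' *: c = x - b by rewrite e2 addrK.
  have h3 : (k - k') *: c = b - a by rewrite scalerBl h1 h2 opprB addrC addrA addrNK.
  have nz : k - k' != 0 by rewrite subr_eq0.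
  apply: (subZinv sN (Kdiv _ nz)).
  rewrite h3; apply: subB => //; [exact: sum_r | exact: sum_l].
have [a0 [Aa0 [nMa0 _]]] := proj2 cMA.
have nBa0 : ~ B a0 by move=> Ba0; apply: nMa0.
have sMC : subsp M C.
  move=> m [Am Bm]; case: (classic (C m)) => // nCm; exfalso.
  have [k2 [c2 [Cc2 ea0]]] := L1 Kdiv sC cCAC (sum_l sC Am) nCm (sum_l sC Aa0).
  have [s [m' [[Am' Bm'] ec2]]] := Hdec c2 Cc2.
  case: (eqVneq s 0) => [s0|ns0].
    apply: nBa0; rewrite ea0 ec2 s0 scale0r add0r; apply: subD => //; exact: subZ.
  apply: nAc; apply: (subZinv sA (Kdiv _ ns0)).
  have e : s *: c = c2 - m' by rewrite ec2 addrK.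
  have e' : c2 = a0 - k2 *: m by rewrite ea0 [_ + c2]addrC addrK.
  rewrite e e'.
  apply: subB => //; apply: subB => //; exact: subZ.
have cMC : codim1 M C.
  split => //; exists c; split => //; split => //; by case.
left; exists M; split; first by split; [exact: cap_sub | exists A].
by do 2 (split; first by split); split.
Qed.
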